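(* Consider a batch contextual bandit with finite context space $\mathcal{S}$, finite action space $\mathcal{A}$, context distribution $d_0$, reward distributions $R(s,a)\in\Delta([0,R_{\max}])$, behavior policy $\pi_b$, $\mu:=d_0\times\pi_b$, and finite class $\mathcal{F}$ of functions $\mathcal{S}\times\mathcal{A}\to[0,R_{\max}]$. Suppose $C<+\infty$ satisfies $\pi_b(a\mid s)\ge1/C$ for all $s,a$, and suppose $f^\star\in\mathcal{F}$ is a valid reward function, i.e. $\mathbb{E}_{(s,a)\sim\nu}[f^\star(s,a)]=\mathbb{E}_{(s,a)\sim\nu,\,r\sim R(s,a)}[r]$ for every admissible $\nu$ and $\mathcal{L}_\mu(f')-\mathcal{L}_\mu(f^\star)=\|f'-f^\star\|_\mu^2$ for every $f'\in\mathcal{F}$. Let $Q^\star(s,a)=\mathbb{E}_{r\sim R(s,a)}[r]$, $\epsilon_{\mathrm{approx}}:=\inf_{f\in\mathcal{F}}\|f-Q^\star\|_\mu^2$, and let $\epsilon\ge0$ satisfy $\epsilon\le\epsilon_{\mathrm{approx}}/2$. Then $$v^\star-2\sqrt{C(\epsilon+\epsilon_{\mathrm{approx}})}\ \le\ v^{\pi_{f^\star}}-2\sqrt{C\epsilon}.$$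
   Context: $\mathcal{L}_\mu(f):=\mathbb{E}_{(s,a)\sim\mu,\,r\sim R(s,a)}[(f(s,a)-r)^2]$; $\|g\|_\nu^2:=\mathbb{E}_{(s,a)\sim\nu}[g(s,a)^2]$; $\pi_f$ is the greedy policy $s\mapsto\arg\max_af(s,a)$ (fixed tie-breaking); admissible distributions are $d_0\times\pi_f$ for $f\in\mathcal{F}$; $v^\pi:=\mathbb{E}_{s\sim d_0,\,r\sim R(s,\pi(s))}[r]$; $v^\star:=\mathbb{E}_{s\sim d_0}[\max_aQ^\star(s,a)]$. *)

(* Defs.v *)
From HB Require Import structures.
From mathcomp Require Import all_boot all_order all_algebra.
From mathcomp Require Import all_classical all_reals all_analysis.
Set Implicit Arguments. Unset Strict Implicit. Unset Printing Implicit Defensive.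
Import Order.TTheory GRing.Theory Num.Theory.
Local Open Scope ring_scope.
Local Open Scope classical_set_scope.

Section Bandit.
Variables (R : realType) (S A : finType).

Definition reward_model := S -> A -> probability (measurableTypeR R) R.

Definition Qstar (Rw : reward_model) (s : S) (a : A) : R :=
  Rintegral (Rw s a) setT (fun r : R => r).

Definition loss (Rw : reward_model) (d0 : S -> R) (pib : S -> A -> R)
    (f : S -> A -> R) : R :=
  \sum_(s : S) \sum_(a : A) d0 s * pib s a *
     Rintegral (Rw s a) setT (fun r : R => (f s a - r) ^+ 2).

Definition normsq (d0 : S -> R) (pib : S -> A -> R) (g : S -> A -> R) : R :=
  \sum_(s : S) \sum_(a : A) d0 s * pib s a * (g s a) ^+ 2.

Definition greedy (a0 : A) (f : S -> A -> R) (s : S) : A :=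
  [arg max_(a > a0) f s a]%O.

Definition expect_pol (d0 : S -> R) (pi : S -> A) (g : S -> A -> R) : R :=
  \sum_(s : S) d0 s * g s (pi s).

Definition value (Rw : reward_model) (d0 : S -> R) (pi : S -> A) : R :=
  \sum_(s : S) d0 s * Qstar Rw s (pi s).

Definition vstar (Rw : reward_model) (d0 : S -> R) (a0 : A) : R :=
  \sum_(s : S) d0 s * \big[Num.max/Qstar Rw s a0]_(a : A) Qstar Rw s a.

End Bandit.

(* Main.v *)
Require Import Defs.
From HB Require Import structures.
From mathcomp Require Import all_boot all_order all_algebra.
From mathcomp Require Import all_classical all_reals all_analysis.
From mathcomp Require Import measurable_realfun lebesgue_integral.
From mathcomp Require Import lra ring.
Import Order.TTheory GRing.Theory Num.Theory.
Local Open Scope ring_scope.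
Local Open Scope classical_set_scope.

Lemma int_bdd (R : realType) (P : probability (measurableTypeR R) R) (Rmax K : R) (h : R -> R) :
  P [set r : R | 0 <= r <= Rmax] = 1%E -> measurable_fun setT h ->
  (forall r, 0 <= r <= Rmax -> `|h r| <= K) -> P.-integrable setT (EFin \o h).
Proof.
move=> P1 mh hK.
set D := [set r : R | 0 <= r <= Rmax].
have mD : measurable D.
  rewrite (_ : D = `[0, Rmax]%classic); first exact: measurable_itv.
  by apply/seteqP; split => x /=; rewrite in_itv.
have PC : P (~` D) = 0%E by rewrite probability_setC // P1 subee.
have mEh : measurable_fun setT (EFin \o h) by exact/measurable_EFinP.
apply/(@negligible_integrable _ _ _ P setT (~` D) (EFin \o h)).
- exact: measurableC.
- exact: measurableT.
- exact: mEh.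
- exact: PC.
rewrite setTD setCK.
apply: (@le_integrable _ _ _ P D mD (EFin \o h) (EFin \o cst K)).
- exact: measurable_funS mEh.
- move=> x Dx /=; rewrite lee_fin; apply: le_trans (hK _ Dx) _; exact: ler_norm.
- exact: finite_measure_integrable_cst.
Qed.

Lemma int_quad (R : realType) (P : probability (measurableTypeR R) R) (Rmax a b c0 : R) :
  P [set r : R | 0 <= r <= Rmax] = 1%E ->
  P.-integrable setT (EFin \o (fun r : R => a * r ^+ 2 + b * r + c0)).
Proof.
move=> P1; apply: (@int_bdd R P Rmax (`|a| * Rmax ^+ 2 + `|b| * Rmax + `|c0|) _ P1).
  apply: measurable_funD; last exact: measurable_cst.
  apply: measurable_funD; apply: measurable_funM; try exact: measurable_cst.
    exact: measurable_funX.
  exact: measurable_id.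
move=> r /andP[r0 rM].
apply: le_trans (ler_normD _ _) _; apply: lerD => //.
apply: le_trans (ler_normD _ _) _; apply: lerD.
  rewrite normrM ler_wpM2l // ger0_norm ?exprn_ge0 //.
  nra.
by rewrite normrM ler_wpM2l // ger0_norm.
Qed.

Lemma int_quad' (R : realType) (P : probability (measurableTypeR R) R) (Rmax a b c0 : R) (h : R -> R) :
  P [set r : R | 0 <= r <= Rmax] = 1%E -> (forall r, h r = a * r ^+ 2 + b * r + c0) ->
  P.-integrable setT (EFin \o h).
Proof.
move=> P1 hE; rewrite (_ : h = (fun r : R => a * r ^+ 2 + b * r + c0)); last exact/funext.
exact: int_quad P1.
Qed.

Lemma Rint_quad (R : realType) (P : probability (measurableTypeR R) R) (Rmax a b c0 : R) :
  P [set r : R | 0 <= r <= Rmax] = 1%E ->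
  Rintegral P setT (fun r : R => a * r ^+ 2 + b * r + c0) =
  a * Rintegral P setT (fun r : R => r ^+ 2) + b * Rintegral P setT (fun r : R => r) + c0.
Proof.
move=> P1.
rewrite (@RintegralD _ _ _ P setT (fun r : R => a * r ^+ 2 + b * r) (fun _ => c0)) //; first last.
- by apply: (@int_quad' R P Rmax 0 0 c0) => // r; ring.
- by apply: (@int_quad' R P Rmax a b 0) => // r; ring.
rewrite (@RintegralD _ _ _ P setT (fun r : R => a * r ^+ 2) (fun r : R => b * r)) //; first last.
- by apply: (@int_quad' R P Rmax 0 b 0) => // r; ring.
- by apply: (@int_quad' R P Rmax a 0 0) => // r; ring.
rewrite (@RintegralZl _ _ _ P setT (fun r : R => r ^+ 2)) //; last first.
  by apply: (@int_quad' R P Rmax 1 0 0) => // r; ring.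
rewrite (@RintegralZl _ _ _ P setT (fun r : R => r)) //; last first.
  by apply: (@int_quad' R P Rmax 0 1 0) => // r; ring.
rewrite Rintegral_cst // (_ : fine _ = 1) ?mulr1 //.
exact: (congr1 fine (probability_setT P)).
Qed.

Lemma loss_sa (R : realType) (P : probability (measurableTypeR R) R) (Rmax c : R) :
  P [set r : R | 0 <= r <= Rmax] = 1%E ->
  Rintegral P setT (fun r : R => (c - r) ^+ 2) =
  (c - Rintegral P setT (fun r : R => r)) ^+ 2 +
  (Rintegral P setT (fun r : R => r ^+ 2) - (Rintegral P setT (fun r : R => r)) ^+ 2).
Proof.
move=> P1.
rewrite (_ : (fun r : R => (c - r) ^+ 2) = (fun r : R => 1 * r ^+ 2 + (-2 * c) * r + c ^+ 2)); last first.
  by apply/funext => r; ring.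
rewrite (@Rint_quad R P Rmax _ _ _ P1); ring.
Qed.

Lemma cauchy_w (R : realType) (S : finType) (d m : S -> R) :
  (forall s, 0 <= d s) -> \sum_(s : S) d s = 1 ->
  (\sum_(s : S) d s * m s) ^+ 2 <= \sum_(s : S) d s * m s ^+ 2.
Proof.
move=> d0 d1; set M := \sum_(s : S) d s * m s.
have h : 0 <= \sum_(s : S) d s * (m s - M) ^+ 2.
  by apply: sumr_ge0 => s _; apply: mulr_ge0 => //; exact: sqr_ge0.
have e : \sum_(s : S) d s * (m s - M) ^+ 2 =
   \sum_(s : S) d s * m s ^+ 2 - (2 * M) * M + M ^+ 2 * \sum_(s : S) d s.
  have e1 : (2 * M) * M = \sum_(s : S) 2 * M * (d s * m s) by rewrite -mulr_sumr.
  have e2 : M ^+ 2 * \sum_(s : S) d s = \sum_(s : S) M ^+ 2 * d s by rewrite mulr_sumr.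
  rewrite e1 e2 -sumrB -big_split /=.
  by apply: eq_bigr => s _; ring.
rewrite e d1 in h; lra.
Qed.

Lemma nsq0 (R : realType) (S A : finType) d0 pib (g : S -> A -> R) :
  (forall s, 0 <= d0 s) -> (forall s a, 0 <= pib s a) -> 0 <= normsq d0 pib g.
Proof.
move=> h1 h2; apply: sumr_ge0 => s _; apply: sumr_ge0 => a _.
by apply: mulr_ge0; [exact: mulr_ge0 | exact: sqr_ge0].
Qed.

Theorem proposition1 (R : realType) (S A : finType) (a0 : A)
  (Rmax : R) (d0 : S -> R) (pib : S -> A -> R) (Rw : reward_model R S A)
  (I : finType) (F : I -> (S -> A -> R)) (istar : I) (C eps : R) :
  (forall s, 0 <= d0 s) -> \sum_(s : S) d0 s = 1 ->
  (forall s a, 0 <= pib s a) -> (forall s, \sum_(a : A) pib s a = 1) ->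
  (forall s a, Rw s a [set r : R | 0 <= r <= Rmax] = 1%E) ->
  (forall i s a, 0 <= F i s a <= Rmax) ->
  0 < C -> (forall s a, C^-1 <= pib s a) ->
  (* f* := F istar is a valid reward function *)
  (forall i, expect_pol d0 (greedy a0 (F i)) (F istar) =
             value Rw d0 (greedy a0 (F i))) ->
  (forall i, loss Rw d0 pib (F i) - loss Rw d0 pib (F istar) =
             normsq d0 pib (fun s a => F i s a - F istar s a)) ->
  let eps_approx :=
    inf (range (fun i => normsq d0 pib (fun s a => F i s a - Qstar Rw s a))) in
  0 <= eps -> eps <= eps_approx / 2 ->
  vstar Rw d0 a0 - 2 * Num.sqrt (C * (eps + eps_approx))
    <= value Rw d0 (greedy a0 (F istar)) - 2 * Num.sqrt (C * eps).
Proof.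
move=> d0ge0 d0sum pibge0 pibsum Rw1 Fb C0 Cpib Hexp Hloss ea eps0 epsle.
set Q := Qstar Rw.
set fs := F istar.
set K := \sum_(s : S) \sum_(a : A) d0 s * pib s a *
   (Rintegral (Rw s a) setT (fun r : R => r ^+ 2) - (Q s a) ^+ 2).
have lossE : forall f, loss Rw d0 pib f = normsq d0 pib (fun s a => f s a - Q s a) + K.
  move=> f; rewrite /loss /normsq /K -big_split /=; apply: eq_bigr => s _.
  rewrite -big_split /=; apply: eq_bigr => a _.
  rewrite (@loss_sa R (Rw s a) Rmax (f s a) (Rw1 s a)) /Q /Qstar; ring.
set es := normsq d0 pib (fun s a => fs s a - Q s a).
have minE : forall i, es <= normsq d0 pib (fun s a => F i s a - Q s a).
  move=> i; have := Hloss i; rewrite !lossE => h.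
  have := @nsq0 R S A d0 pib (fun s a => F i s a - F istar s a) d0ge0 pibge0.
  rewrite -h /es /fs; lra.
have eaE : ea = es.
  have lb : lbound (range (fun i => normsq d0 pib (fun s a => F i s a - Qstar Rw s a))) es.
    by move=> y [i _ <-]; exact: minE.
  apply/le_anti/andP; split.
    by apply: (ge_inf (ex_intro _ es lb)); exists istar.
  by apply: lb_le_inf => //; exists es; exists istar.
set g := greedy a0 fs.
pose am s := [arg max_(a > a0) Q s a]%O.
have amax : forall s a, Q s a <= Q s (am s).
  move=> s a; rewrite /am; case: arg_maxP => // i _ Hi; exact: Hi.
have gmax : forall s a, fs s a <= fs s (g s).
  move=> s a; rewrite /g /greedy; case: arg_maxP => // i _ Hi; exact: Hi.
pose m s := `|Q s (am s) - fs s (am s)|.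
have vb : vstar Rw d0 a0 - value Rw d0 g <= \sum_(s : S) d0 s * m s.
  rewrite /vstar -Hexp /expect_pol -sumrB; apply: ler_sum => s _.
  rewrite -mulrBr; apply: ler_wpM2l => //.
  have h1 : \big[Num.max/Q s a0]_(a : A) Q s a <= Q s (am s).
    by apply: bigmax_le => // a _.
  have h2 := gmax s (am s).
  have h3 : Q s (am s) - fs s (am s) <= m s by exact: ler_norm.
  change (\big[Num.max/Q s a0]_(a : A) Q s a - fs s (g s) <= m s); lra.
have Cpos : forall s a, 1 <= C * pib s a.
  move=> s a; rewrite -(mulfV (lt0r_neq0 C0)); apply: ler_wpM2l; [exact: ltW | exact: Cpib].
have mb : \sum_(s : S) d0 s * m s ^+ 2 <= C * es.
  have -> : C * es = \sum_(s : S) d0 s * (C * \sum_(a : A) pib s a * (fs s a - Q s a) ^+ 2).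
    rewrite /es /normsq mulr_sumr; apply: eq_bigr => s _.
    rewrite !mulr_sumr; apply: eq_bigr => a _; ring.
  apply: ler_sum => s _; apply: ler_wpM2l => //.
  rewrite (bigD1 (am s)) //= mulrDr.
  have h0 : 0 <= C * \sum_(a | a != am s) pib s a * (fs s a - Q s a) ^+ 2.
    apply: mulr_ge0; first exact: ltW.
    by apply: sumr_ge0 => a _; apply: mulr_ge0 => //; exact: sqr_ge0.
  have hm : m s ^+ 2 = (fs s (am s) - Q s (am s)) ^+ 2.
    by rewrite /m real_normK ?num_real //; ring.
  have hC := Cpos s (am s).
  have hx := sqr_ge0 (fs s (am s) - Q s (am s)).
  rewrite hm; nra.
have M0 : 0 <= \sum_(s : S) d0 s * m s.
  by apply: sumr_ge0 => s _; apply: mulr_ge0 => //; exact: normr_ge0.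
have cs := @cauchy_w R S d0 m d0ge0 d0sum.
have es0 : 0 <= es by exact: nsq0.
set c := Num.sqrt (C * es).
have c0 : 0 <= c by exact: sqrtr_ge0.
have c2 : c ^+ 2 = C * es by rewrite sqr_sqrtr // mulr_ge0 // ltW.
have vc : vstar Rw d0 a0 - value Rw d0 g <= c by nra.
rewrite eaE in epsle *.
set a := Num.sqrt (C * eps).
set b := Num.sqrt (C * (eps + es)).
have a0' : 0 <= a by exact: sqrtr_ge0.
have b0 : 0 <= b by exact: sqrtr_ge0.
have a2 : a ^+ 2 = C * eps by rewrite sqr_sqrtr // mulr_ge0 // ltW.
have b2 : b ^+ 2 = C * (eps + es) by rewrite sqr_sqrtr // mulr_ge0 // ?addr_ge0 // ltW.
have hCe : 2 * (C * eps) <= C * es.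
  have : 2 * eps <= es by lra.
  move=> h; nra.
have h1 : 4 * a <= 3 * c by nra.
have h2 : (c + 2 * a) ^+ 2 <= (2 * b) ^+ 2 by nra.
have h3 : c + 2 * a <= 2 * b by nra.
lra.
Qed.
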